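(* (Ennaoui–Selberg identity.) Let $f$ be an L-additive arithmetic function whose associated completely multiplicative function $h_f$ is nonzero-valued, and let $\Lambda_f$ be its generalized von Mangoldt function. Then for every integer $n>1$, $$\frac{\Lambda_f(n)f(n)}{h_f(n)}+\sum_{d\mid n}\Lambda_f(d)\Lambda_f\!\left(\frac{n}{d}\right)=\sum_{d\mid n}\mu\!\left(\frac{n}{d}\right)\frac{f^2(d)}{h_f^2(d)},$$ i.e. $\frac{f\Lambda_f}{h_f}+\Lambda_f\ast\Lambda_f=\mu\ast\left(\frac{f}{h_f}\right)^2$.
   Context: An arithmetic function $f:\mathbb{N}\to\mathbb{C}$ is L-additive if there is a completely multiplicative function $h_f$ such that $f(mn)=f(m)h_f(n)+f(n)h_f(m)$ for all positive integers $m,n$; such an $h_f$ is fixed. $\Lambda_f(n)=\frac{f(p)}{h_f(p)}$ if $n=p^k$ for some prime $p$ and integer $k\geq1$, and $0$ otherwise. $\mu$ is the Möbius function and $\ast$ is Dirichlet convolution; products and quotients of arithmetic functions are pointwise. *)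

(* Defs.v *)
From HB Require Import structures.
From mathcomp Require Import all_boot all_order all_algebra.
From mathcomp Require Import complex.
Set Implicit Arguments. Unset Strict Implicit. Unset Printing Implicit Defensive.
Import Order.TTheory GRing.Theory Num.Theory.
Local Open Scope ring_scope.

(* Arithmetic functions are maps nat -> C; only values at n >= 1 matter. *)

Definition completely_multiplicative (C : nzRingType) (h : nat -> C) : Prop :=
  h 1%N = 1 /\ forall m n : nat, (0 < m)%N -> (0 < n)%N -> h (m * n)%N = h m * h n.

Definition L_additive_wrt (C : nzRingType) (f h : nat -> C) : Prop :=
  completely_multiplicative h /\
  forall m n : nat, (0 < m)%N -> (0 < n)%N ->
    f (m * n)%N = f m * h n + f n * h m.

(* Generalized von Mangoldt function: f(p)/h(p) if n = p^k (p prime, k >= 1),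
   and 0 otherwise.  n = p^k with k >= 1 iff primes n = [:: p]. *)
Definition vonMangoldt_f (C : fieldType) (f h : nat -> C) (n : nat) : C :=
  if primes n is [:: p] then f p / h p else 0.

Definition squarefree (n : nat) : bool :=
  (0 < n)%N && all (fun p => logn p n == 1%N) (primes n).

Definition mobius (C : nzRingType) (n : nat) : C :=
  if squarefree n then (-1) ^+ size (primes n) else 0.

Definition dconv (C : nzRingType) (a b : nat -> C) (n : nat) : C :=
  \sum_(d <- divisors n) a d * b (n %/ d)%N.

(* Main.v *)
Require Import Defs.
From HB Require Import structures.
From mathcomp Require Import all_boot all_order all_algebra.
From mathcomp Require Import complex zify ring.
Set Implicit Arguments. Unset Strict Implicit. Unset Printing Implicit Defensive.
Import Order.TTheory GRing.Theory Num.Theory.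
Local Open Scope ring_scope.

Section Div.
Variable C : nzRingType.

Lemma divKK n d : (0 < n)%N -> (d %| n)%N -> (n %/ (n %/ d))%N = d.
Proof.
move=> n0 dn; have d0 := dvdn_gt0 n0 dn.
have q0 : (0 < n %/ d)%N by rewrite divn_gt0 // dvdn_leq.
by rewrite -{1}(divnK dn) mulKn.
Qed.

Lemma sum_sub (F : nat -> C) n d : (0 < n)%N -> (d %| n)%N ->
  \sum_(e <- divisors d) F e = \sum_(e <- divisors n | (e %| d)%N) F e.
Proof.
move=> n0 dn; have d0 := dvdn_gt0 n0 dn.
rewrite -[RHS]big_filter; apply: perm_big; apply: uniq_perm.
- exact: divisors_uniq.
- by rewrite filter_uniq // divisors_uniq.
move=> x; rewrite mem_filter -!dvdn_divisors //.
by apply/idP/andP => [xd|[//]]; split => //; apply: dvdn_trans dn.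
Qed.

Lemma sum_mult (H : nat -> C) n e : (0 < n)%N -> (e %| n)%N ->
  \sum_(d <- divisors n | (e %| d)%N) H (d %/ e)%N = \sum_(c <- divisors (n %/ e)) H c.
Proof.
move=> n0 en; have e0 := dvdn_gt0 n0 en.
have q0 : (0 < n %/ e)%N by rewrite divn_gt0 // dvdn_leq.
transitivity (\sum_(c <- divisors (n %/ e)) H ((e * c) %/ e)%N); last first.
  by apply: eq_bigr => c _; rewrite mulKn.
rewrite -(big_map (fun c => (e * c)%N) xpredT (fun d => H (d %/ e)%N)).
rewrite -[LHS]big_filter; apply: perm_big; apply: uniq_perm.
- by rewrite filter_uniq // divisors_uniq.
- rewrite map_inj_uniq ?divisors_uniq // => a b /eqP; rewrite eqn_pmul2l // => /eqP.
  done.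
move=> x; rewrite mem_filter -dvdn_divisors //; apply/andP/mapP.
- case=> ex xn; exists (x %/ e)%N; last by rewrite mulnC divnK.
  by rewrite -dvdn_divisors // dvdn_divRL // divnK.
- case=> c; rewrite -dvdn_divisors // => cn ->; split; first exact: dvdn_mulr.
  by rewrite mulnC -dvdn_divRL.
Qed.

Lemma sum_flip (F : nat -> C) n : (0 < n)%N ->
  \sum_(d <- divisors n) F (n %/ d)%N = \sum_(d <- divisors n) F d.
Proof.
move=> n0; rewrite -(big_map (fun d => n %/ d)%N xpredT F).
apply: (perm_big _ _); apply: uniq_perm.
- rewrite map_inj_in_uniq ?divisors_uniq // => a b.
  rewrite -!dvdn_divisors // => an bn eq.
  by rewrite -(divKK n0 an) eq divKK.
- exact: divisors_uniq.
move=> x; apply/mapP/idP.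
- by case=> d; rewrite -!dvdn_divisors // => dn ->; apply: dvdn_div.
- rewrite -dvdn_divisors // => xn; exists (n %/ x)%N; last by rewrite divKK.
  by rewrite -dvdn_divisors // dvdn_div.
Qed.

Lemma sum_exch (F : nat -> nat -> C) n : (0 < n)%N ->
  \sum_(d <- divisors n) \sum_(e <- divisors d) F e (d %/ e)%N
  = \sum_(e <- divisors n) \sum_(c <- divisors (n %/ e)) F e c.
Proof.
move=> n0.
rewrite (eq_big_seq (fun d => \sum_(e <- divisors n | (e %| d)%N) F e (d %/ e)%N)); last first.
  by move=> d; rewrite -dvdn_divisors // => dn; rewrite (sum_sub _ n0 dn).
under eq_bigr do rewrite big_mkcond.
rewrite exchange_big /=.
apply: eq_big_seq => e; rewrite -dvdn_divisors // => en.
rewrite -(sum_mult (F e) n0 en) [RHS]big_mkcond.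
by apply: eq_bigr.
Qed.

End Div.
Section Mob.
Variable C : nzRingType.

Lemma primes_mulp p c : prime p -> (0 < c)%N -> ~~ (p %| c)%N ->
  perm_eq (primes (p * c)) (p :: primes c).
Proof.
move=> pp c0 npc; apply: uniq_perm; first exact: primes_uniq.
  by rewrite /= primes_uniq andbT mem_primes pp c0.
move=> x; rewrite (primesM _ (prime_gt0 pp) c0) (primes_prime pp) !inE.
by [].
Qed.

Lemma mob_mulp p c : prime p -> (0 < c)%N -> ~~ (p %| c)%N ->
  mobius C (p * c) = - mobius C c.
Proof.
move=> pp c0 npc; have E := primes_mulp pp c0 npc.
rewrite /mobius /squarefree (perm_all _ E) (perm_size E) /= muln_gt0 prime_gt0 // c0 /=.
have -> : (logn p (p * c) == 1%N) by rewrite (lognM _ (prime_gt0 pp) c0) logn_prime // eqxx logn_coprime // prime_coprime.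
have -> : all (fun q => logn q (p * c) == 1%N) (primes c) = all (fun q => logn q c == 1%N) (primes c).
  apply: eq_in_all => q; rewrite mem_primes => /and3P[qp _ qc].
  rewrite (lognM _ (prime_gt0 pp) c0) logn_prime //.
  case: (eqVneq q p) => [qE|_]; last by rewrite add0n.
  by subst q; rewrite qc in npc.
by rewrite /=; case: ifP => _; rewrite ?exprS ?mulN1r ?oppr0.
Qed.

Lemma mob_mulp0 p c : prime p -> (0 < c)%N -> (p %| c)%N -> mobius C (p * c) = 0.
Proof.
move=> pp c0 pc; rewrite /mobius /squarefree.
have pin : p \in primes (p * c) by rewrite mem_primes pp muln_gt0 prime_gt0 // c0 dvdn_mulr.
have : ~~ (logn p (p * c) == 1%N).
  rewrite (lognM _ (prime_gt0 pp) c0) logn_prime // eqxx.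
  have : (0 < logn p c)%N by rewrite -pfactor_dvdn // expn1.
  by case: (logn p c).
move=> H; case: ifP => // /andP[_ /allP /(_ _ pin)]; by rewrite (negbTE H).
Qed.

Lemma mobius1 : mobius C 1 = 1.
Proof. by rewrite /mobius /squarefree /=. Qed.

Lemma sum_mobius n : (0 < n)%N ->
  \sum_(d <- divisors n) mobius C d = (n == 1%N)%:R.
Proof.
move=> n0; case: (ltngtP n 1) => [|n1|->]; first by rewrite ltnNge n0.
  2: by rewrite big_seq1 mobius1.
set p := pdiv n; have pp : prime p by exact: pdiv_prime.
have pn : (p %| n)%N by exact: pdiv_dvd.
set m := (n %/ p)%N.
have nE : n = (m * p)%N by rewrite divnK.
have m0 : (0 < m)%N by rewrite divn_gt0 ?prime_gt0 // dvdn_leq.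
rewrite (bigID (fun d => p %| d)%N) /=.
rewrite (eq_bigr (fun d => mobius C (p * (d %/ p)))); last first.
  by move=> d pd; rewrite mulnC divnK.
rewrite (sum_mult (fun c => mobius C (p * c)) n0 pn) -/m.
rewrite (bigID (fun c => p %| c)%N) /= big1_seq; last first.
  move=> c /andP[pc]; rewrite -dvdn_divisors // => cm.
  by apply: mob_mulp0 => //; apply: dvdn_gt0 cm.
rewrite add0r -big_filter (eq_big_seq (fun c => - mobius C c)); last first.
  move=> c; rewrite mem_filter -dvdn_divisors // => /andP[npc cm].
  by apply: mob_mulp => //; apply: dvdn_gt0 cm.
rewrite sumrN.
suff -> : \sum_(i <- divisors n | ~~ (p %| i)%N) mobius C i
        = \sum_(i <- [seq i <- divisors m | ~~ (p %| i)%N]) mobius C i by rewrite addNr.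
rewrite -[LHS]big_filter; apply: perm_big; apply: uniq_perm.
- by rewrite filter_uniq // divisors_uniq.
- by rewrite filter_uniq // divisors_uniq.
move=> x; rewrite !mem_filter -!dvdn_divisors //.
case px: (p %| x)%N => //=.
by rewrite {1}nE Gauss_dvdl // coprime_sym prime_coprime // px.
Qed.
End Mob.

Section Main.
Variable C : fieldType.
Variables f h : nat -> C.
Hypothesis Hf : L_additive_wrt f h.
Hypothesis Hh : forall n : nat, (0 < n)%N -> h n != 0.

Let g n := f n / h n.
Let L := vonMangoldt_f f h.

Lemma g_add m n : (0 < m)%N -> (0 < n)%N -> g (m * n) = g m + g n.
Proof.
move=> m0 n0; case: Hf => [[h1 hM] fM].
rewrite /g fM // hM //.
have hm := Hh m0; have hn := Hh n0.
by field; apply/andP.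
Qed.

Lemma g1 : g 1 = 0.
Proof.
have := g_add (ltn0Sn 0) (ltn0Sn 0); rewrite muln1 => /eqP.
by rewrite -subr_eq0 opprD addrA subrr sub0r oppr_eq0 => /eqP.
Qed.

Lemma sumL_step p m : prime p -> (0 < m)%N ->
  \sum_(d <- divisors (p * m)) L d = \sum_(d <- divisors m) L d + g p.
Proof.
move=> pp m0; have pm0 : (0 < p * m)%N by rewrite muln_gt0 prime_gt0.
rewrite (bigID (fun d => d %| m)%N) /= -(sum_sub _ pm0 (dvdn_mull _ (dvdnn m))).
congr (_ + _).
set k := (logn p m).+1.
have lpm : logn p (p * m) = k by rewrite (lognM _ (prime_gt0 pp) m0) logn_prime // eqxx.
rewrite -big_filter (bigD1_seq (p ^ k)%N) ?filter_uniq ?divisors_uniq //=; last first.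
  rewrite mem_filter -dvdn_divisors // !pfactor_dvdn // lpm leqnn andbT.
  by rewrite /k ltnn.
rewrite big1_seq ?addr0; last first.
  move=> d /andP[nd]; rewrite mem_filter -dvdn_divisors // => /andP[ndm dpm].
  have d0 : (0 < d)%N := dvdn_gt0 pm0 dpm.
  rewrite /L /vonMangoldt_f; case E: (primes d) => [|q [|q' s]] //.
  have dE : d = (q ^ logn q d)%N.
    by rewrite {1}(prod_prime_decomp d0) prime_decompE E big_map big_seq1.
  have : q \in primes d by rewrite E inE.
  rewrite mem_primes => /and3P[qp _ _].
  case: (eqVneq q p) => [qE|qnp].
    subst q.
    have H1 : (logn p d <= k)%N by rewrite -lpm -pfactor_dvdn // -dE.
    have H2 : (k <= logn p d)%N by rewrite ltnNge -pfactor_dvdn // -dE.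
    have jk : logn p d = k by apply/eqP; rewrite eqn_leq H1 H2.
    by rewrite dE jk eqxx in nd.
  have cop : coprime d p.
    by rewrite dE coprimeXl // prime_coprime // dvdn_prime2 // (negbTE qnp).
  by move: dpm; rewrite (Gauss_dvdr _ cop) => dpm; rewrite dpm in ndm.
by rewrite /L /vonMangoldt_f primesX // primes_prime.
Qed.

Lemma sumL n : (0 < n)%N -> \sum_(d <- divisors n) L d = g n.
Proof.
elim: n {-2}n (leqnn n) => [|N IH] n le n0; first by case: n le n0.
case: (ltngtP n 1) => [|n1|->]; first by rewrite ltnNge n0.
  2: by rewrite big_seq1 g1 /L /vonMangoldt_f.
set p := pdiv n; have pp : prime p by exact: pdiv_prime.
have pn : (p %| n)%N by exact: pdiv_dvd.
set m := (n %/ p)%N.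
have nE : n = (p * m)%N by rewrite mulnC divnK.
have m0 : (0 < m)%N by rewrite divn_gt0 ?prime_gt0 // dvdn_leq.
have mN : (m <= N)%N.
  have : (m < n)%N by rewrite nE -{1}(mul1n m) ltn_pmul2r // prime_gt1.
  by move=> lt; rewrite -ltnS; apply: leq_trans lt le.
by rewrite nE sumL_step // IH // g_add // ?prime_gt0 // addrC.
Qed.

Let a n := L n * f n / h n + dconv L L n.

Lemma sum_a c : (0 < c)%N -> \sum_(e <- divisors c) a e = g c ^+ 2.
Proof.
move=> c0; rewrite big_split /= /dconv (sum_exch (fun e x => L e * L x)) //.
rewrite [X in _ + X](eq_big_seq (fun e => L e * g (c %/ e)%N)); last first.
  move=> e; rewrite -dvdn_divisors // => ec.
  rewrite -big_distrr /= sumL //.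
  by rewrite divn_gt0 ?(dvdn_gt0 c0 ec) // dvdn_leq.
rewrite -big_split /= (eq_big_seq (fun e => L e * g c)); last first.
  move=> e; rewrite -dvdn_divisors // => ec.
  have e0 := dvdn_gt0 c0 ec.
  have q0 : (0 < c %/ e)%N by rewrite divn_gt0 // dvdn_leq.
  by rewrite -mulrA -/(g e) -mulrDr -g_add // mulnC divnK.
by rewrite -big_distrl /= sumL // expr2.
Qed.

Lemma main_id n : (0 < n)%N ->
  a n = dconv (fun m => mobius C m) (fun d => g d ^+ 2) n.
Proof.
move=> n0; rewrite /dconv.
rewrite (eq_big_seq (fun d => \sum_(e <- divisors (n %/ d)) mobius C d * a (n %/ (d * e))%N)); last first.
  move=> d; rewrite -dvdn_divisors // => dn.
  have q0 : (0 < n %/ d)%N by rewrite divn_gt0 ?(dvdn_gt0 n0 dn) // dvdn_leq.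
  rewrite -sum_a // -(sum_flip _ q0) big_distrr /=.
  by apply: eq_bigr => e _; rewrite divnMA.
rewrite -(sum_exch (fun d c => mobius C d * a (n %/ (d * c))%N) n0).
rewrite (eq_big_seq (fun d => (d == 1%N)%:R * a (n %/ d)%N)); last first.
  move=> d; rewrite -dvdn_divisors // => dn.
  have d0 := dvdn_gt0 n0 dn.
  rewrite -sum_mobius // big_distrl /=.
  apply: eq_big_seq => e; rewrite -dvdn_divisors // => ed.
  by rewrite mulnC divnK.
rewrite (bigD1_seq 1%N) ?divisors_uniq -?dvdn_divisors ?dvd1n //=.
rewrite big1_seq ?addr0 ?eqxx ?mul1r ?divn1 //.
by move=> d /andP[/negbTE -> _]; rewrite mul0r.
Qed.
End Main.

Local Open Scope complex_scope.

Theorem theorem2p8 (R : rcfType) (f h : nat -> R[i])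
  (Hf : L_additive_wrt f h)
  (Hh : forall n : nat, (0 < n)%N -> h n != 0)
  (n : nat) (Hn : (1 < n)%N) :
  vonMangoldt_f f h n * f n / h n
    + dconv (vonMangoldt_f f h) (vonMangoldt_f f h) n
  = dconv (fun m => mobius R[i] m) (fun d => (f d / h d) ^+ 2) n.
Proof. exact: (main_id Hf Hh (ltnW Hn)). Qed.
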